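(* Let $\Gamma\neq\mathbb N$ be a numerical semigroup that is a complete intersection, minimally generated by $\{r_0,\ldots,r_h\}$. If $\mathrm m(\Gamma)\neq 2$, then $r_k<\mathrm F(\Gamma)$ for all $k\in\{0,\ldots,h\}$.
   Context: A numerical semigroup $\Gamma$ is a submonoid of $(\mathbb N,+)$ with finite complement in $\mathbb N$. It has a unique minimal generating system, whose cardinality is the embedding dimension $\mathrm e(\Gamma)$ and whose smallest element is the multiplicity $\mathrm m(\Gamma)$. The Frobenius number $\mathrm F(\Gamma)$ is the largest integer not in $\Gamma$. With minimal generators $r_0,\ldots,r_h$, let $\varphi:\mathbb N^{h+1}\to\Gamma$, $\varphi(a)=\sum a_ir_i$; a presentation of $\Gamma$ is a generating set of the congruence $\ker\varphi=\{(a,b):\varphi(a)=\varphi(b)\}$, and a minimal presentation is an inclusion-minimal one (its cardinality is always at least $\mathrm e(\Gamma)-1$). $\Gamma$ is a complete intersection if a minimal presentation has cardinality $\mathrm e(\Gamma)-1$. *)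

(* Defs.v *)
From mathcomp Require Import all_boot.
Set Implicit Arguments.
Unset Strict Implicit.
Unset Printing Implicit Defensive.

Definition numerical_semigroup (G : nat -> Prop) : Prop :=
  [/\ G 0,
      (forall x y, G x -> G y -> G (x + y)) &
      exists N, forall n, N <= n -> G n].

Definition vec (n : nat) := {ffun 'I_n -> nat}.

Definition vadd n (a b : vec n) : vec n := [ffun i => a i + b i].

Definition phi h (r : 'I_h.+1 -> nat) (a : vec h.+1) : nat :=
  \sum_(i < h.+1) a i * r i.

Definition minimally_generated_by (G : nat -> Prop) h (r : 'I_h.+1 -> nat) : Prop :=
  [/\ injective r,
      (forall x, G x <-> exists a : vec h.+1, x = phi r a) &
      (forall i, ~ exists a : vec h.+1, a i = 0 /\ r i = phi r a)].

Definition is_multiplicity (G : nat -> Prop) (m : nat) : Prop :=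
  [/\ 0 < m, G m & forall x, G x -> 0 < x -> m <= x].

Definition is_frobenius (G : nat -> Prop) (f : nat) : Prop :=
  ~ G f /\ (forall n, f < n -> G n).

Inductive cong_gen n (rho : vec n * vec n -> Prop) : vec n -> vec n -> Prop :=
| cg_base a b : rho (a, b) -> cong_gen rho a b
| cg_refl a : cong_gen rho a a
| cg_sym a b : cong_gen rho a b -> cong_gen rho b a
| cg_trans a b c : cong_gen rho a b -> cong_gen rho b c -> cong_gen rho a c
| cg_add a b c : cong_gen rho a b -> cong_gen rho (vadd a c) (vadd b c).

Definition presentation h (r : 'I_h.+1 -> nat) (s : seq (vec h.+1 * vec h.+1)) : Prop :=
  forall a b, cong_gen (fun p => p \in s) a b <-> phi r a = phi r b.

Definition minimal_presentation h (r : 'I_h.+1 -> nat) (s : seq (vec h.+1 * vec h.+1)) : Prop :=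
  presentation r s /\
  forall s' : seq (vec h.+1 * vec h.+1),
    {subset s' <= s} -> presentation r s' -> {subset s <= s'}.

(* complete intersection: some minimal presentation has cardinality
   e(Gamma) - 1 = (h+1) - 1 = h *)
Definition complete_intersection h (r : 'I_h.+1 -> nat) : Prop :=
  exists s : seq (vec h.+1 * vec h.+1),
    [/\ uniq s, size s = h & minimal_presentation r s].

(* Main.v *)
Require Import Defs.
From mathcomp Require Import all_boot zify.
Set Implicit Arguments.
Unset Strict Implicit.
Unset Printing Implicit Defensive.

Definition ev m (i : 'I_m) : vec m := [ffun x => nat_of_bool (x == i)].
Definition vsub m (a b : vec m) : vec m := [ffun x => a x - b x].
Definition le_v m (s a : vec m) : bool := [forall x, s x <= a x].

Lemma phiD h (r : 'I_h.+1 -> nat) (a b : vec h.+1) : phi r (vadd a b) = phi r a + phi r b.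
Proof. rewrite /phi -big_split /=; apply: eq_bigr => i _; by rewrite ffunE mulnDl. Qed.

Lemma phi_ev h (r : 'I_h.+1 -> nat) i : phi r (ev i) = r i.
Proof.
rewrite /phi (bigD1 i) //= big1 ?ffunE ?eqxx ?mul1n ?addn0 // => j Hj.
by rewrite ffunE (negbTE Hj) mul0n.
Qed.

Lemma phi_ge h (r : 'I_h.+1 -> nat) (a : vec h.+1) x : a x * r x <= phi r a.
Proof. by rewrite /phi (bigD1 x) //= leq_addr. Qed.

Lemma vdec m (b : vec m) x : 0 < b x -> b = vadd (ev x) (vsub b (ev x)).
Proof.
move=> H; apply/ffunP => y; rewrite !ffunE.
case: (y =P x) => [->|_] /=; lia.
Qed.

Lemma vaddA m (a b c : vec m) : vadd (vadd a b) c = vadd a (vadd b c).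
Proof. apply/ffunP => y; rewrite !ffunE; lia. Qed.

Lemma vaddC m (a b : vec m) : vadd a b = vadd b a.
Proof. apply/ffunP => y; rewrite !ffunE; lia. Qed.

Lemma vaddE m (a b : vec m) x : vadd a b x = a x + b x.
Proof. by rewrite ffunE. Qed.

Lemma evE m (i x : 'I_m) : ev i x = (x == i).
Proof. by rewrite ffunE. Qed.

Definition isoP m (P : seq (vec m * vec m)) z :=
  forall q, q \in P -> ~~ le_v q.1 z /\ ~~ le_v q.2 z.

Lemma le_v_add m (s x c : vec m) : le_v s x -> le_v s (vadd x c).
Proof.
move=> /forallP H; apply/forallP => y; rewrite ffunE.
exact: leq_trans (H y) (leq_addr _ _).
Qed.

Lemma le_v_refl m (s : vec m) : le_v s s.
Proof. by apply/forallP. Qed.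

Lemma iso_cong m (P : seq (vec m * vec m)) a b :
  cong_gen (fun q => q \in P) a b -> (isoP P a -> a = b) /\ (isoP P b -> a = b).
Proof.
elim => {a b}.
- move=> a b H; split => Hi; have [H1 H2] := Hi _ H.
  + by rewrite le_v_refl in H1.
  + by rewrite le_v_refl in H2.
- by move=> a; split.
- by move=> a b _ [H1 H2]; split => Hi; [rewrite H2|rewrite H1].
- move=> a b c _ [H1 H2] _ [H3 H4]; split => Hi.
  + have E := H1 Hi; subst b; exact: H3.
  + have E := H4 Hi; subst b; exact: H2.
- move=> a b c _ [H1 H2]; split => Hi.
  + rewrite H1 // => q Hq; have [A B] := Hi q Hq; split; apply/negP => C.
    * by move: A; rewrite (le_v_add c C).
    * by move: B; rewrite (le_v_add c C).
  + rewrite H2 // => q Hq; have [A B] := Hi q Hq; split; apply/negP => C.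
    * by move: A; rewrite (le_v_add c C).
    * by move: B; rewrite (le_v_add c C).
Qed.

Definition forcedP m (P : seq (vec m * vec m)) w :=
  exists q, q \in P /\ ((q.1 = w /\ q.2 <> w) \/ (q.2 = w /\ q.1 <> w)).

Lemma forced_cong h (r : 'I_h.+1 -> nat) (P : seq (vec h.+1 * vec h.+1)) w
  (pres : forall a b, cong_gen (fun q => q \in P) a b -> phi r a = phi r b)
  (WI : forall b, phi r b = phi r w -> (exists x, 0 < w x /\ 0 < b x) -> b = w) a b :
  cong_gen (fun q => q \in P) a b -> (a = w <-> b = w) \/ forcedP P w.
Proof.
elim => {a b}.
- move=> a b H; case: (a =P w) => Ha; case: (b =P w) => Hb.
  + by left.
  + by right; exists (a, b); split => //; left.
  + by right; exists (a, b); split => //; right.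
  + by left; split.
- by move=> a; left.
- by move=> a b _ [[H1 H2]|H]; [left|right].
- move=> a b c _ [[H1 H2]|H] _ [[H3 H4]|H']; try by right.
  by left; split => E; [apply: H3; apply: H1|apply: H2; apply: H4].
- move=> a b c Hab [[H1 H2]|H]; last by right.
  left; have Pab := pres _ _ Hab.
  case: (boolP [exists i, 0 < c i]) => [/existsP [i Hi]|Hc].
  + split => E.
    * apply: WI; first by rewrite phiD -Pab -phiD E.
      exists i; rewrite -E !vaddE; split; lia.
    * apply: WI; first by rewrite phiD Pab -phiD E.
      exists i; rewrite -E !vaddE; split; lia.
  + have c0 : forall (x : vec h.+1), vadd x c = x.
      move=> x; apply/ffunP => y; rewrite vaddE.
      move/existsPn: Hc => /(_ y); rewrite lt0n negbK => /eqP ->; by rewrite addn0.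
    rewrite (c0 a) (c0 b); split; assumption.
Qed.

Lemma phi_supp1 h (r : 'I_h.+1 -> nat) (s : vec h.+1) p :
  (forall x, x != p -> s x = 0) -> phi r s = s p * r p.
Proof.
move=> H; rewrite /phi (bigD1 p) //= big1 ?addn0 // => j Hj; by rewrite H.
Qed.

Definition tp m (p : 'I_m) (t : nat) : vec m := [ffun x => if x == p then t else 0].

Lemma phi_tp h (r : 'I_h.+1 -> nat) p t : phi r (tp p t) = t * r p.
Proof.
rewrite (@phi_supp1 _ _ _ p) ?ffunE ?eqxx // => x Hx; by rewrite ffunE (negbTE Hx).
Qed.

Lemma ar1 (n rp ri f : nat) : rp < n -> ri < n -> f < n -> 0 < rp ->
  f < n + n * rp - ri /\ ri <= n + n * rp.
Proof. move=> *; have : n <= n * rp by rewrite leq_pmulr. lia. Qed.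
Lemma ar2 (X n rp ri f : nat) : rp < n -> ri < n -> 0 < rp -> ri <= n -> f < n -> X = n + n ->
  f < n + (X - rp) - ri /\ ri <= n + (X - rp).
Proof. lia. Qed.
Lemma ar3 (X n rp rj f : nat) : rp < n -> f < n -> rp <= rj -> X = n + rj ->
  f < n + (X - rp) - rj /\ rj <= n + (X - rp).
Proof. lia. Qed.

Section Core.
Variables (h : nat) (r : 'I_h.+1 -> nat) (f : nat) (P : seq (vec h.+1 * vec h.+1)).
Variables (K p i0 : 'I_h.+1).
Hypothesis rinj : injective r.
Hypothesis rpos : forall i, 0 < r i.
Hypothesis ufac : forall j (c : vec h.+1), phi r c = r j -> c = ev j.
Hypothesis inGam : forall x, f < x -> exists c, x = phi r c.
Hypothesis pres : forall a b, cong_gen (fun q => q \in P) a b <-> phi r a = phi r b.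
Hypothesis Puniq : uniq P.
Hypothesis Psize : size P = h.
Hypothesis Kmax : forall i, r i <= r K.
Hypothesis pmin : forall i, r p <= r i.
Hypothesis fK : f < r K.
Hypothesis i0K : i0 != K.
Hypothesis i0p : i0 != p.
Hypothesis pK : p != K.

Definition iso j : vec h.+1 := if j == K then vadd (ev K) (ev K) else vadd (ev K) (ev j).

Lemma phi_iso j : phi r (iso j) = r K + (if j == K then r K else r j).
Proof. rewrite /iso; case: (j == K); by rewrite phiD !phi_ev. Qed.

Lemma isoE j x : iso j x = (x == K) + (if j == K then nat_of_bool (x == K) else nat_of_bool (x == j)).
Proof. rewrite /iso; case: (j == K); by rewrite vaddE !evE. Qed.

Lemma presP a b : cong_gen (fun q => q \in P) a b -> phi r a = phi r b.
Proof. by move/pres. Qed.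

Lemma WI j b : phi r b = phi r (iso j) -> (exists x, 0 < iso j x /\ 0 < b x) -> b = iso j.
Proof.
move=> Hb [x [Hw Hx]]; rewrite (vdec Hx) in Hb *.
move: Hb; rewrite phiD phi_ev phi_iso.
move: Hw; rewrite isoE.
case: (x =P K) => [->|xK] /= Hw.
- move=> E.
  have E' : phi r (vsub b (ev K)) = (if j == K then r K else r j) by lia.
  rewrite /iso; case: (j =P K) E' => [_|_] E'; by rewrite (ufac E').
- case: (j =P K) Hw => [_|jK]; first by rewrite addn0.
  case: (x =P j) => [xj|] //= _; subst x.
  move=> E; have E' : phi r (vsub b (ev j)) = r K by lia.
  rewrite (ufac E') /iso; case: (j =P K) => // _; exact: vaddC.
Qed.

Lemma stepA j : j != p -> forcedP P (iso j).
Proof.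
move=> jp.
have rpn : r p < r K.
  have := Kmax p; rewrite leq_eqVlt => /orP [/eqP /rinj E|//].
  by move: pK; rewrite E eqxx.
have [c Hc] : exists c, phi r (iso j) - r p = phi r c.
  apply: inGam; rewrite phi_iso; have := pmin j; case: (j == K); lia.
set b := vadd (ev p) c.
have Hb : phi r (iso j) = phi r b.
  rewrite /b phiD phi_ev -Hc; rewrite phi_iso; have := pmin j; case: (j == K); lia.
have := forced_cong presP (@WI j) (proj2 (pres _ _) Hb).
case=> // [[H _]]; have E := H erefl.
have : b p = iso j p by rewrite E.
rewrite /b vaddE evE eqxx isoE (negbTE pK).
case: (j == K) => //=; rewrite eq_sym (negbTE jp) //.
Qed.


Definition forced_b j (q : vec h.+1 * vec h.+1) :=
  (q \in P) && (((q.1 == iso j) && (q.2 != iso j)) || ((q.2 == iso j) && (q.1 != iso j))).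

Lemma pairP q : q \in P -> phi r q.1 = phi r q.2.
Proof. move=> Hq; apply: presP; apply: cg_base; by rewrite -surjective_pairing. Qed.

Lemma lev_inj j j' : phi r (iso j) = phi r (iso j') -> j = j'.
Proof.
rewrite !phi_iso; case: (j =P K) => [->|jK]; case: (j' =P K) => [->|j'K] // E.
- have E' : r K = r j' by lia. by case: j'K; apply: rinj.
- have E' : r j = r K by lia. by case: jK; apply: rinj.
- apply: rinj; lia.
Qed.

Lemma forced_inj j j' q : forced_b j q -> forced_b j' q -> j = j'.
Proof.
case/andP=> Hq H1 /andP [_ H2]; have E := pairP Hq.
apply: lev_inj.
move: H1 H2 => /orP [/andP [/eqP A _]|/andP [/eqP A _]] /orP [/andP [/eqP B _]|/andP [/eqP B _]];
  by rewrite -A -B ?E.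
Qed.

Lemma stepB q : q \in P -> exists2 j, j != p & forced_b j q.
Proof.
have exG : forall j, exists q, (j == p) || forced_b j q.
  move=> j; case: (j =P p) => [->|/eqP jp]; first by exists (ev p, ev p); apply/orP; left.
  have [q0 [Hq0 H]] := stepA jp; exists q0; apply/orP; right; rewrite /forced_b Hq0 /=.
  by case: H => [[-> /eqP ->]|[-> /eqP ->]]; rewrite eqxx ?orbT.
pose g j := xchoose (exG j).
set S := enum (predC1 p).
have gS : forall j, j \in S -> forced_b j (g j).
  move=> j; rewrite mem_enum /= => jp; have := xchooseP (exG j); case/orP => [/eqP E|//]; move: jp; rewrite E; by move/negP.
have U : uniq [seq g j | j <- S].
  rewrite map_inj_in_uniq ?enum_uniq // => j j' Hj Hj' Eg.
  apply: (@forced_inj _ _ (g j)); [exact: gS | rewrite Eg; exact: gS].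
have Sub : {subset [seq g j | j <- S] <= P}.
  by move=> q' /mapP [j Hj ->]; have /andP [] := gS j Hj.
have Sz : size P <= size [seq g j | j <- S].
  by rewrite size_map Psize -cardE cardC1 card_ord.
have [_ E] := uniq_min_size U Sub Sz.
move=> Hq; rewrite -E in Hq; case/mapP: Hq => j Hj ->.
exists j; last exact: gS; by move: Hj; rewrite mem_enum.
Qed.

Lemma stepC q s : q \in P -> (s = q.1 \/ s = q.2) ->
  (exists2 j, j != p & s = iso j) \/
  (s K = 0 /\ exists2 j, j != p & phi r s = phi r (iso j)).
Proof.
move=> Hq Hs; have [j jp Hf] := stepB Hq.
have E := pairP Hq.
case: (s =P iso j) => [->|sj]; first by left; exists j.
right.
have Hs' : phi r s = phi r (iso j).
  case/andP: Hf => _ /orP [/andP [/eqP A _]|/andP [/eqP A _]]; case: Hs => ->; by rewrite -A ?E.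
split; last by exists j.
apply/eqP; rewrite -leqn0 leqNgt; apply/negP => sK; apply: sj.
apply: WI => //; exists K; rewrite isoE eqxx; split => //.
Qed.


Definition bad t := has (fun q : vec h.+1 * vec h.+1 => le_v q.1 (tp p t) || le_v q.2 (tp p t)) P.
Definition at_ t := vadd (ev K) (tp p t).

Lemma atE t x : at_ t x = (x == K) + (if x == p then t else 0).
Proof. by rewrite /at_ vaddE evE ffunE. Qed.

Lemma D1 t : ~~ bad t -> isoP P (at_ t).
Proof.
move=> Hb q Hq.
have Kp : (K == p) = false by rewrite eq_sym (negbTE pK).
have side : forall s, (s = q.1 \/ s = q.2) -> ~~ le_v s (at_ t).
  move=> s Hs; case: (stepC Hq Hs) => [[j jp ->]|[sK _]].
  - apply/negP => /forallP H.
    case: (j =P K) => [jK|jK].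
    + by have := H K; rewrite isoE atE eqxx jK eqxx Kp.
    + have := H j; rewrite isoE atE eqxx (negbTE jp).
      by case: (j =P K).
  - apply/negP => Hle; move/negP: Hb; apply; apply/hasP; exists q => //.
    have Hle' : le_v s (tp p t).
      apply/forallP => x; have := forallP Hle x; rewrite atE ffunE.
      by case: (x =P K) => [->|_]; [rewrite sK|].
    by case: Hs => <-; rewrite Hle' ?orbT.
by split; apply: side; [left|right].
Qed.

Lemma rpn : r p < r K.
Proof.
have := Kmax p; rewrite leq_eqVlt => /orP [/eqP /rinj E|//].
by move: pK; rewrite E eqxx.
Qed.

Lemma ri0 : r i0 < r K.
Proof.
have := Kmax i0; rewrite leq_eqVlt => /orP [/eqP /rinj E|//].
by move: i0K; rewrite E eqxx.
Qed.

Lemma D2 : exists t i, ~~ bad t /\ i != K /\ i != p /\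
  f < r K + t * r p - r i /\ r i <= r K + t * r p.
Proof.
have H1 := rpn; have H2 := ri0; have H3 := rpos p; have H4 := pmin i0.
case: (boolP (bad (r K))) => Hn; last first.
  exists (r K), i0; do 3 split => //.
  exact: (ar1 H1 H2 fK H3).
have exP : exists t, bad t by exists (r K).
case: (ex_minnP exP) => t1 Hbad Hmin.
case/hasP: Hbad => q Hq /orP Hs.
have [s [Hsq Hle]] : exists s, (s = q.1 \/ s = q.2) /\ le_v s (tp p t1).
  by case: Hs => H; [exists q.1; split => //; left|exists q.2; split => //; right].
have Kp : (K == p) = false by rewrite eq_sym (negbTE pK).
case: (stepC Hq Hsq) => [[j jp Es]|[sK [j jp Hj]]].
  move/forallP: Hle => /(_ K); rewrite Es isoE eqxx ffunE Kp.
  by rewrite leqn0 addn_eq0.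
have s0 : forall x, x != p -> s x = 0.
  by move=> x xp; move/forallP: Hle => /(_ x); rewrite ffunE (negbTE xp) leqn0 => /eqP.
have sp : s p <= t1 by move/forallP: Hle => /(_ p); rewrite ffunE eqxx.
have phis := phi_supp1 r s0.
have t1pos : 0 < t1.
  rewrite lt0n; apply/negP => /eqP t10; move: Hj; rewrite phis phi_iso.
  have -> : s p = 0 by apply/eqP; rewrite -leqn0 -t10.
  by rewrite mul0n => /esym /eqP; rewrite addn_eq0 (negbTE (lt0n_neq0 (rpos K))).
have nb : ~~ bad t1.-1.
  by apply/negP => /Hmin; rewrite leqNgt ltn_predL t1pos.
have spt : s p = t1.
  apply/eqP; rewrite eqn_leq sp /=; rewrite leqNgt; apply/negP => lt.
  move/negP: nb; apply; apply/hasP; exists q => //.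
  have Hle' : le_v s (tp p t1.-1).
    apply/forallP => x; rewrite ffunE; case: (x =P p) => [->|/eqP xp]; first by rewrite -ltnS (ltn_predK lt).
    by rewrite s0.
  by case: Hsq => <-; rewrite Hle' ?orbT.
have lv : t1 * r p = r K + (if j == K then r K else r j) by rewrite -spt -phis Hj phi_iso.
have tm : t1.-1 * r p = t1 * r p - r p by rewrite -subn1 mulnBl mul1n.
move: lv; case: (j =P K) => [jK|/eqP jK] lv.
- exists t1.-1, i0; do 3 split => //; rewrite tm.
  apply: (ar2 H1 H2 H3 (ltnW H2) fK); exact: lv.
- have := pmin j => Hj'.
  exists t1.-1, j; do 3 split => //; rewrite tm.
  apply: (ar3 H1 fK Hj'); exact: lv.
Qed.


Lemma core_false : False.
Proof.
have [t [i [Hb [iK [ip [H1 H2]]]]]] := D2.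
have [c Hc] := inGam H1.
set b := vadd (ev i) c.
have E : phi r (at_ t) = phi r b.
  by rewrite /b /at_ !phiD !phi_ev phi_tp -Hc subnKC.
have [Hiso _] := iso_cong (proj2 (pres _ _) E).
have Eb := Hiso (D1 Hb).
have := congr1 (fun v : vec h.+1 => v i) Eb.
by rewrite /= atE /b vaddE evE eqxx (negbTE iK) (negbTE ip).
Qed.

End Core.

Lemma case_h0 (G : nat -> Prop) (r : 'I_1 -> nat) f :
  (forall x, G x <-> exists a, x = phi r a) -> ~ G f -> (forall n, f < n -> G n) -> False.
Proof.
move=> Gphi Hf Hf'.
have ph : forall c : vec 1, phi r c = c ord0 * r ord0.
  by move=> c; apply: phi_supp1 => x; rewrite ord1 eqxx.
have d1 : r ord0 %| f.+1.
  have [c ->] := (Gphi _).1 (Hf' _ (ltnSn f)); by rewrite ph dvdn_mull.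
have d2 : r ord0 %| f.+1 + 1.
  have [c ->] := (Gphi (f.+1 + 1)).1 (Hf' _ (leq_addr 1 f.+1)); by rewrite ph dvdn_mull.
move: d2; rewrite (dvdn_addr _ d1) dvdn1 => /eqP r1.
apply: Hf; apply/Gphi; exists (tp ord0 f); by rewrite phi_tp r1 muln1.
Qed.

Lemma case_h0' h (G : nat -> Prop) (r : 'I_h.+1 -> nat) f : h = 0 ->
  (forall x, G x <-> exists a, x = phi r a) -> ~ G f -> (forall n, f < n -> G n) -> False.
Proof. move=> E; subst h; exact: case_h0. Qed.

Lemma ar_h1 (u v b : nat) : 2 < b -> 0 < u * 2 + v * b -> 2 <= u * 2 + v * b.
Proof. case: v => [|v]; lia. Qed.

Lemma case_h1 (G : nat -> Prop) (r : 'I_2 -> nat) f (p K : 'I_2) :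
  p != K -> r p < r K -> (forall i, 0 < r i) ->
  (forall i, ~ exists a : vec 2, a i = 0 /\ r i = phi r a) ->
  (forall x, G x <-> exists a, x = phi r a) -> f < r K -> ~ G f ->
  (forall n, f < n -> G n) -> ~ is_multiplicity G 2 -> False.
Proof.
move=> pK ab rpos Gmin Gphi fK Hf Hf' nm2.
have two : forall x : 'I_2, x != p -> x = K.
  move=> x xp; apply/val_inj; move: xp pK; rewrite -!val_eqE /=.
  have := ltn_ord x; have := ltn_ord p; have := ltn_ord K; lia.
have ph : forall c : vec 2, phi r c = c p * r p + c K * r K.
  move=> c; rewrite /phi (bigD1 p) //= (bigD1 K) /=; last by rewrite eq_sym.
  rewrite big1 ?addn0 // => x /andP [xp xK]; by rewrite (two x xp) eqxx in xK.
have fl : f < r K + r K - r p by lia.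
have [c Hc] := (Gphi (r K + r K - r p)).1 (Hf' _ fl).
rewrite ph in Hc.
have Kp : (K == p) = false by rewrite eq_sym (negbTE pK).
case: (posnP (c K)) => cK; last first.
  case: (ltnP 1 (c K)) => cK2.
    have : 2 * r K <= c K * r K by rewrite leq_mul2r cK2 orbT.
    have := rpos p; lia.
  have cK1 : c K = 1 by lia.
  apply: (Gmin K); exists (tp p (c p).+1); rewrite ffunE Kp; split => //.
  rewrite phi_tp; rewrite cK1 mul1n in Hc; rewrite mulSn; lia.
rewrite cK mul0n addn0 in Hc.
have Hs : r K * 2 = (c p).+1 * r p by rewrite mulSn -Hc; lia.
have cop : coprime (r p) (r K).
  have dG : forall x, G x -> gcdn (r p) (r K) %| x.
    move=> x /Gphi [a ->]; rewrite ph.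
    by rewrite dvdn_add // dvdn_mull // ?dvdn_gcdl ?dvdn_gcdr.
  have d1 := dG _ (Hf' _ (ltnSn f)).
  have d2 := dG _ (Hf' (f.+1 + 1) (leq_addr 1 f.+1)).
  by move: d2; rewrite (dvdn_addr _ d1) dvdn1.
have : r p %| r K * 2 by rewrite Hs dvdn_mull.
rewrite Gauss_dvdr // => d2.
have := dvdn_leq (erefl true : 0 < 2) d2.
have := rpos p.
case: (r p =P 1) => [r1|r1].
  move=> _ _; apply: Hf; apply/Gphi; exists (tp p f); by rewrite phi_tp r1 muln1.
case: (r p =P 2) => [r2|r2]; last by lia.
move=> _ _; apply: nm2; split => //.
  by apply/Gphi; exists (ev p); rewrite phi_ev.
move=> x /Gphi [a ->]; rewrite ph r2 => Hx.
apply: ar_h1 => //; by rewrite -r2.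
Qed.

Lemma case_h1' h (G : nat -> Prop) (r : 'I_h.+1 -> nat) f (p K : 'I_h.+1) : h = 1 ->
  p != K -> r p < r K -> (forall i, 0 < r i) ->
  (forall i, ~ exists a : vec h.+1, a i = 0 /\ r i = phi r a) ->
  (forall x, G x <-> exists a, x = phi r a) -> f < r K -> ~ G f ->
  (forall n, f < n -> G n) -> ~ is_multiplicity G 2 -> False.
Proof. move=> E; subst h; exact: case_h1. Qed.

Unset Implicit Arguments.

Theorem proposition2p11 (G : nat -> Prop) (h : nat) (r : 'I_h.+1 -> nat) :
  numerical_semigroup G ->
  (exists n, ~ G n) ->
  minimally_generated_by G r ->
  complete_intersection r ->
  ~ is_multiplicity G 2 ->
  forall f, is_frobenius G f -> forall k : 'I_h.+1, r k < f.
Proof.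
move=> _ _ [rinj Gphi Gmin] [P [Puniq Psize [Ppres _]]] nm2 f [Hf Hf'] k.
rewrite ltnNge; apply/negP => Hkf.
have rpos : forall i, 0 < r i.
  move=> i; rewrite lt0n; apply/negP => /eqP r0; apply: (Gmin i).
  exists [ffun => 0]; rewrite ffunE; split => //.
  by rewrite r0 /phi big1 // => j _; rewrite ffunE.
have Gr : forall i, G (r i) by move=> i; apply/Gphi; exists (ev i); rewrite phi_ev.
have fk : f < r k.
  rewrite ltn_neqAle Hkf andbT; apply/eqP => E; apply: Hf; rewrite E; exact: Gr.
have ufac : forall j (c : vec h.+1), phi r c = r j -> c = ev j.
  move=> j c Hc; case: (posnP (c j)) => cj.
    by case: (Gmin j); exists c.
  rewrite (vdec cj) in Hc *; rewrite phiD phi_ev in Hc.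
  have z : phi r (vsub c (ev j)) = 0 by lia.
  apply/ffunP => x; rewrite vaddE.
  have := phi_ge r (vsub c (ev j)) x; rewrite z leqn0 muln_eq0 (negbTE (lt0n_neq0 (rpos x))) orbF.
  by move/eqP ->; rewrite addn0.
have inGam : forall x, f < x -> exists c, x = phi r c by move=> x /Hf' /Gphi.
pose K := [arg max_(i > k) r i].
have Kmax : forall i, r i <= r K by rewrite /K; case: arg_maxnP => // j _ H i; exact: H.
pose p := [arg min_(i < k) r i].
have pmin : forall i, r p <= r i by rewrite /p; case: arg_minnP => // j _ H i; exact: H.
have fK : f < r K := leq_trans fk (Kmax k).
have pK : 0 < h -> p != K.
  move=> hpos; apply/negP => /eqP E.
  have : r ord0 = r ord_max.
    by apply/eqP; rewrite eqn_leq; rewrite -E in Kmax; rewrite !(leq_trans (Kmax _) (pmin _)).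
  by move/rinj/(congr1 val) => /= E'; move: hpos; rewrite -E'.
have [h0|[h1|h2]] : h = 0 \/ h = 1 \/ 1 < h by lia.
- exact: case_h0' h0 Gphi Hf Hf'.
- have hp : 0 < h by rewrite h1.
  have pK' := pK hp.
  have ab : r p < r K.
    rewrite ltn_neqAle Kmax andbT; apply/eqP => /rinj E; by rewrite E eqxx in pK'.
  exact: (case_h1' h1 pK' ab rpos Gmin Gphi fK Hf Hf' nm2).
- have [i0 [i0K i0p]] : exists i0 : 'I_h.+1, i0 != K /\ i0 != p.
    case: (pickP (fun i : 'I_h.+1 => (i != K) && (i != p))) => [i0 /andP [? ?]|none].
      by exists i0.
    have hv : forall m, m < 3 -> (m == nat_of_ord K) || (m == nat_of_ord p).
      move=> m Hm; have := negbT (none (inord m)); rewrite negb_and !negbK.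
      case/orP => /eqP E; rewrite -E inordK ?eqxx ?orbT //; lia.
    have := hv 0 erefl; have := hv 1 erefl; have := hv 2 erefl; lia.
  have hp : 0 < h by lia.
  exact: (core_false rinj rpos ufac inGam Ppres Puniq Psize Kmax pmin fK i0K i0p (pK hp)).
Qed.
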